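(* Let $f_0,f_1:X\to\mathbb{R}$ be Morse functions and $\mathcal{F},\mathcal{G}$ two $\mathcal{A}_\infty$-modules over $C_*(\Omega X)$. Let $\{m^0_{x,y}\}_{x,y\in\mathrm{Crit}(f_0)}$, $\{m^1_{x',y'}\}_{x',y'\in\mathrm{Crit}(f_1)}$ be twisting cocycles and $\{\tau_{x,y'}\in C_{|x|-|y'|}(\Omega X)\}$ a family with $\partial\tau_{x,y'}=\sum_z m^0_{x,z}\tau_{z,y'}-\sum_{w'}(-1)^{|x|-|w'|}\tau_{x,w'}m^1_{w',y'}$. Let $\Psi_{\mathcal{F}}:C_*(X,m^0,\mathcal{F})\to C_*(X,m^1,\mathcal{F})$ and $\Psi_{\mathcal{G}}:C_*(X,m^0,\mathcal{G})\to C_*(X,m^1,\mathcal{G})$ be the morphisms $\Psi=\sum_{n\ge1}\sum_{u=1}^n(-1)^{u-1}(\nu_{n+1}\otimes1)\tilde{\mathbf m}_{(1)}^{n-u}\tilde{\boldsymbol\tau}\tilde{\mathbf m}_{(0)}^{u-1}$ (with $\nu=\nu^{\mathcal{F}}$, resp. $\nu^{\mathcal{G}}$). Let $\boldsymbol\varphi:(\mathcal{F},\nu^{\mathcal{F}})\to(\mathcal{G},\nu^{\mathcal{G}})$ be a morphism of $\mathcal{A}_\infty$-modules and $\tilde\varphi_i=\sum_{n\ge0}(\varphi_{n+1}\otimes1)\tilde{\mathbf m}_{(i)}^n:C_*(X,m^i,\mathcal{F})\to C_*(X,m^i,\mathcal{G})$ for $i=0,1$. Then $\Psi_{\mathcal{G}}\circ\tilde\varphi_0$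 and $\tilde\varphi_1\circ\Psi_{\mathcal{F}}$ are chain homotopic.
   Context: $C_*(\Omega X)$: cubical chains of Moore based loops, an $\mathcal{A}_\infty$-algebra with $\mu_1$ the differential, $\mu_2$ Pontryagin product, $\mu_i=0$ for $i\ge3$; Koszul sign rule throughout. Twisting cocycles satisfy $\partial m_{x,y}=\sum_z(-1)^{|x|-|z|}m_{x,z}m_{z,y}$ with $m_{x,y}\in C_{|x|-|y|-1}(\Omega X)$. An $\mathcal{A}_\infty$-module $(\mathcal{A},\nu_n)$: $\nu_n:\mathcal{A}\otimes C_*(\Omega X)^{\otimes n-1}\to\mathcal{A}$ of degree $n-2$ with $\sum_{s+t=N,s\ge1}(-1)^{st}\nu_{t+1}(\nu_s\otimes1^{\otimes t})+\sum_{r+s+t=N,r,s\ge1}(-1)^{r+st}\nu_{r+t+1}(1^{\otimes r}\otimes\mu_s\otimes1^{\otimes t})=0$. A morphism $\boldsymbol\varphi$: maps $\varphi_n:\mathcal{F}\otimes C_*(\Omega X)^{\otimes n-1}\to\mathcal{G}$ of degree $n-1$ with $\sum_{s+t=N}(-1)^{st}\varphi_{t+1}(\nu^{\mathcal{F}}_s\otimes1^{\otimes t})+\sum_{r+s+t=N,r\ge1}(-1)^{r+st}\varphi_{r+t+1}(1^{\otimes r}\otimes\mu_s\otimes1^{\otimes t})=\sum_{s+t=N}(-1)^{(s+1)t}\nu^{\mathcal{G}}_{t+1}(\varphi_s\otimes1^{\otimes t})$. For a family $c=\{c_{x,y}\}$, $\mathbf c(x)=\sum_y c_{x,y}\otimes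 y$ and $\tilde{\mathbf c}(\alpha\otimes\gamma_1\otimes\cdots\otimes\gamma_k\otimes x)=(1^{\otimes k+1}\otimes\mathbf c)(\dots)$ on $\mathcal{A}\otimes TC_*(\Omega X)\otimes\mathbb{Z}\mathrm{Crit}$; $C_*(X,m^i,\mathcal{A})=\mathcal{A}\otimes\mathbb{Z}\mathrm{Crit}(f_i)$ with differential $\sum_{n\ge0}(\nu_{n+1}\otimes1)\tilde{\mathbf m}_{(i)}^n$. *)

(* Defs.v *)
(* Algebraic model of the setting of Proposition 5.19:
   C_*(Omega X) is modelled as an abstract nonnegatively graded A_infinity
   algebra over Z with mu_1 = differential, mu_2 = product, mu_i = 0 (i >= 3);
   Crit(f_i) is a finite set graded by the Morse index. *)
From HB Require Import structures.
From mathcomp Require Import all_boot all_order all_algebra.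
Set Implicit Arguments. Unset Strict Implicit. Unset Printing Implicit Defensive.
Import Order.TTheory GRing.Theory Num.Theory.
Local Open Scope ring_scope.

Definition sgz (n : int) : int := if odd (absz n) then -1 else 1.
Definition ssc (V : zmodType) (n : int) (v : V) : V := v *~ sgz n.

(* A graded abelian group: a family of subgroups V_d (d : int) of a common
   carrier, pairwise independent (the total group is their direct sum);
   hom d v means "v is homogeneous of degree d". *)
Definition graded (V : zmodType) (hom : int -> V -> Prop) : Prop :=
  (forall d, hom d 0) /\
  (forall d x y, hom d x -> hom d y -> hom d (x - y)) /\
  (forall d e x, d <> e -> hom d x -> hom e x -> x = 0).

Definition homs (V : zmodType) (hom : int -> V -> Prop) (qs : seq int)
  (cs : seq V) : Prop :=
  size qs = size cs /\
  forall i, (i < size cs)%N -> hom (nth 0 qs i) (nth 0 cs i).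

Definition muA (C : zmodType) (mu1 : C -> C) (mu2 : C -> C -> C)
  (cs : seq C) : C :=
  match cs with
  | [:: c] => mu1 c
  | [:: a; b] => mu2 a b
  | _ => 0
  end.

(* A_infinity relations  sum_{r+s+t=N} (-1)^{r+st} mu_{r+t+1}(1^r (x) mu_s (x) 1^t) = 0,
   Koszul sign rule: mu_s (degree s-2) passes the first r inputs. *)
Definition Ainf_alg (C : zmodType) (Chom : int -> C -> Prop)
  (mu1 : C -> C) (mu2 : C -> C -> C) : Prop :=
  graded Chom /\
  (forall d c, d < 0 -> Chom d c -> c = 0) /\
  (forall x y, mu1 (x + y) = mu1 x + mu1 y) /\
  (forall x y z, mu2 (x + y) z = mu2 x z + mu2 y z) /\
  (forall x y z, mu2 x (y + z) = mu2 x y + mu2 x z) /\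
  (forall d c, Chom d c -> Chom (d - 1) (mu1 c)) /\
  (forall d e a b, Chom d a -> Chom e b -> Chom (d + e) (mu2 a b)) /\
  (forall qs cs, homs Chom qs cs -> (0 < size cs)%N ->
     \sum_(r < size cs) \sum_(s < (size cs - r)%N)
        ssc ((r : nat)%:Z + (s.+1 * (size cs - r - s.+1))%N%:Z
              + ((s.+1)%:Z - 2) * \sum_(q <- take r qs) q)
            (muA mu1 mu2 (take r cs ++ muA mu1 mu2 (take s.+1 (drop r cs))
                                     :: drop (r + s.+1) cs)) = 0).

(* additivity in every argument (Z-multilinearity, i.e. a map out of the
   tensor product V (x) C^{(x) k}) *)
Definition multiadd (C V W : zmodType) (f : V -> seq C -> W) : Prop :=
  (forall cs a b, f (a + b) cs = f a cs + f b cs) /\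
  (forall a cs i c c', (i < size cs)%N ->
     f a (set_nth 0 cs i (c + c')) = f a (set_nth 0 cs i c) + f a (set_nth 0 cs i c')).

(* A_infinity module (F, nu): nu a [c_1;...;c_{n-1}] = nu_n(a (x) c_1 (x) ... (x) c_{n-1}),
   of degree n-2, satisfying for every N >= 1
   sum_{s+t=N,s>=1} (-1)^{st} nu_{t+1}(nu_s (x) 1^t)
   + sum_{r+s+t=N,r,s>=1} (-1)^{r+st} nu_{r+t+1}(1^r (x) mu_s (x) 1^t) = 0. *)
Definition Ainf_module (C : zmodType) (Chom : int -> C -> Prop)
  (mu1 : C -> C) (mu2 : C -> C -> C)
  (F : zmodType) (Fhom : int -> F -> Prop) (nu : F -> seq C -> F) : Prop :=
  graded Fhom /\ multiadd nu /\
  (forall p a qs cs, Fhom p a -> homs Chom qs cs ->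
     Fhom (p + \sum_(q <- qs) q + (size cs)%:Z - 1) (nu a cs)) /\
  (forall p a qs cs, Fhom p a -> homs Chom qs cs ->
     \sum_(s < (size cs).+1)
        ssc ((s.+1 * ((size cs).+1 - s.+1))%N%:Z) (nu (nu a (take s cs)) (drop s cs))
     + \sum_(j < size cs) \sum_(s < (size cs - j)%N)
        ssc ((j.+1)%:Z + (s.+1 * (size cs - j - s.+1))%N%:Z
              + ((s.+1)%:Z - 2) * (p + \sum_(q <- take j qs) q))
            (nu a (take j cs ++ muA mu1 mu2 (take s.+1 (drop j cs))
                              :: drop (j + s.+1) cs)) = 0).

(* Morphism of A_infinity modules: phi a [c_1..c_{n-1}] = phi_n(...), degree n-1. *)
Definition Ainf_morphism (C : zmodType) (Chom : int -> C -> Prop)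
  (mu1 : C -> C) (mu2 : C -> C -> C)
  (F : zmodType) (Fhom : int -> F -> Prop) (nuF : F -> seq C -> F)
  (G : zmodType) (Ghom : int -> G -> Prop) (nuG : G -> seq C -> G)
  (phi : F -> seq C -> G) : Prop :=
  multiadd phi /\
  (forall p a qs cs, Fhom p a -> homs Chom qs cs ->
     Ghom (p + \sum_(q <- qs) q + (size cs)%:Z) (phi a cs)) /\
  (forall p a qs cs, Fhom p a -> homs Chom qs cs ->
     \sum_(s < (size cs).+1)
        ssc ((s.+1 * ((size cs).+1 - s.+1))%N%:Z) (phi (nuF a (take s cs)) (drop s cs))
     + \sum_(j < size cs) \sum_(s < (size cs - j)%N)
        ssc ((j.+1)%:Z + (s.+1 * (size cs - j - s.+1))%N%:Z
              + ((s.+1)%:Z - 2) * (p + \sum_(q <- take j qs) q))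
            (phi a (take j cs ++ muA mu1 mu2 (take s.+1 (drop j cs))
                              :: drop (j + s.+1) cs))
     = \sum_(s < (size cs).+1)
        ssc ((s.+2 * ((size cs).+1 - s.+1))%N%:Z) (nuG (phi a (take s cs)) (drop s cs))).

Definition twisting_cocycle (C : zmodType) (Chom : int -> C -> Prop)
  (mu1 : C -> C) (mu2 : C -> C -> C)
  (Crit : finType) (ind : Crit -> nat) (m : Crit -> Crit -> C) : Prop :=
  (forall x y, Chom ((ind x)%:Z - (ind y)%:Z - 1) (m x y)) /\
  (forall x y, mu1 (m x y) =
     \sum_(z : Crit) ssc ((ind x)%:Z - (ind z)%:Z) (mu2 (m x z) (m z y))).

Definition tau_family (C : zmodType) (Chom : int -> C -> Prop)
  (mu1 : C -> C) (mu2 : C -> C -> C)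
  (C0 C1 : finType) (ind0 : C0 -> nat) (ind1 : C1 -> nat)
  (m0 : C0 -> C0 -> C) (m1 : C1 -> C1 -> C) (tau : C0 -> C1 -> C) : Prop :=
  (forall x y', Chom ((ind0 x)%:Z - (ind1 y')%:Z) (tau x y')) /\
  (forall x y', mu1 (tau x y') =
     \sum_(z : C0) mu2 (m0 x z) (tau z y')
     - \sum_(w' : C1) ssc ((ind0 x)%:Z - (ind1 w')%:Z) (mu2 (tau x w') (m1 w' y'))).

(* Elements of V (x) Z Crit are finite functions Crit -> V (alpha (x) x <-> the
   function with value alpha at x). Homogeneous of total degree p: *)
Definition deg_el (Crit : finType) (ind : Crit -> nat) (V : zmodType)
  (hom : int -> V -> Prop) (p : int) (v : {ffun Crit -> V}) : Prop :=
  forall x, hom (p - (ind x)%:Z) (v x).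

(* Koszul sign of m~^n applied to alpha (x) x of total degree p along the
   path x = z_0 -> z_1 -> ... -> z_n: the k-th application of m~ passes
   alpha (x) gamma_1 ... gamma_k, of degree p - k - |z_k|. *)
Definition msgn (Crit : finType) (ind : Crit -> nat) (p : int) (x : Crit)
  (zs : seq Crit) : int :=
  \sum_(k < size zs) (p - (k : nat)%:Z - (ind (nth x (x :: zs) k))%:Z).

(* sum_{n>=0} (f_{n+1} (x) 1) m~^n on the degree-p part of V (x) Z Crit.
   The series is finite (m_{x,y} = 0 unless |y| < |x|); paths have length
   < #|Crit|, so truncating at n <= #|Crit| is exact. *)
Definition tw (C : zmodType) (Crit : finType) (ind : Crit -> nat)
  (m : Crit -> Crit -> C) (V W : zmodType) (f : V -> seq C -> W) (p : int)
  (v : {ffun Crit -> V}) : {ffun Crit -> W} :=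
  [ffun y => \sum_(n < #|Crit|.+1) \sum_(x : Crit)
      \sum_(zs : n.-tuple Crit | last x zs == y)
        ssc (msgn ind p x zs) (f (v x) (pairmap m x zs))].

(* Psi = sum_{n>=1} sum_{u=1}^n (-1)^{u-1} (nu_{n+1} (x) 1) m~1^{n-u} tau~ m~0^{u-1}
   on the degree-p part (index shift: n+1, u+1 below). tau~ has degree 0,
   so carries no Koszul sign.  Finite: n <= #|C0| + #|C1| - 1 suffices. *)
Definition Psi (C : zmodType) (C0 C1 : finType) (ind0 : C0 -> nat)
  (ind1 : C1 -> nat) (m0 : C0 -> C0 -> C) (m1 : C1 -> C1 -> C)
  (tau : C0 -> C1 -> C) (V : zmodType) (nu : V -> seq C -> V) (p : int)
  (v : {ffun C0 -> V}) : {ffun C1 -> V} :=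
  [ffun y => \sum_(n < #|C0| + #|C1|) \sum_(u < n.+1) \sum_(x : C0)
      \sum_(zs : u.-tuple C0) \sum_(w : C1)
      \sum_(ws : (n - u)%N.-tuple C1 | last w ws == y)
        ssc ((u : nat)%:Z + msgn ind0 p x zs + msgn ind1 (p - (u : nat)%:Z) w ws)
            (nu (v x) (pairmap m0 x zs ++ tau (last x zs) w :: pairmap m1 w ws))].

(* Main.v *)
Require Import Defs.
From HB Require Import structures.
From mathcomp Require Import all_boot all_order all_algebra.
From mathcomp Require Import zify ring.
Set Implicit Arguments. Unset Strict Implicit. Unset Printing Implicit Defensive.
Import Order.TTheory GRing.Theory Num.Theory.
Local Open Scope ring_scope.

Lemma sgz_pm (n : int) : Defs.sgz n = 1 \/ Defs.sgz n = -1.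
Proof. by rewrite /Defs.sgz; case: ifP; auto. Qed.

Lemma sgzD (a b : int) : Defs.sgz (a + b) = Defs.sgz a * Defs.sgz b.
Proof.
rewrite /Defs.sgz.
have -> : odd (absz (a + b)) = odd (absz a) (+) odd (absz b).
  case: (boolP (odd (absz a))) => ha; case: (boolP (odd (absz b))) => hb;
  case: (boolP (odd (absz (a+b)))) => hab //=; exfalso; lia.
by case: (odd (absz a)); case: (odd (absz b)).
Qed.

Lemma sgz_eq (a b : int) : ~~ odd (absz (a - b)) -> Defs.sgz a = Defs.sgz b.
Proof.
move=> h; rewrite /Defs.sgz.
have -> : odd (absz a) = odd (absz b).
  case: (boolP (odd (absz a))) => ha; case: (boolP (odd (absz b))) => hb //; exfalso; lia.
by [].
Qed.

Lemma ssc_eq (V : zmodType) (a b : int) (v : V) :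
  ~~ odd (absz (a - b)) -> ssc a v = ssc b v.
Proof. by move=> h; rewrite /ssc (sgz_eq h). Qed.

Lemma sscD (V : zmodType) (n : int) (u v : V) : ssc n (u + v) = ssc n u + ssc n v.
Proof. by rewrite /ssc mulrzDl. Qed.

Lemma ssc0 (V : zmodType) (n : int) : ssc n (0 : V) = 0.
Proof. by rewrite /ssc mul0rz. Qed.

Lemma sscN (V : zmodType) (n : int) (u : V) : ssc n (- u) = - ssc n u.
Proof. by rewrite /ssc mulNrz. Qed.

Lemma ssc_ssc (V : zmodType) (a b : int) (v : V) : ssc a (ssc b v) = ssc (a + b) v.
Proof. by rewrite /ssc -mulrzA sgzD mulrC. Qed.

Lemma ssc_0 (V : zmodType) (v : V) : ssc 0 v = v.
Proof. by rewrite /ssc /Defs.sgz /= mulr1z. Qed.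

Lemma ssc_1 (V : zmodType) (a : int) (v : V) : ssc (a + 1) v = - ssc a v.
Proof.
have h1 : ssc 1 v = - v by rewrite /ssc /Defs.sgz /= mulrN1z.
by rewrite -ssc_ssc h1 sscN.
Qed.

Lemma ssc_sum (V : zmodType) (I : Type) (r : seq I) (P : pred I) (F : I -> V) n :
  ssc n (\sum_(i <- r | P i) F i) = \sum_(i <- r | P i) ssc n (F i).
Proof. by rewrite /ssc mulrz_suml. Qed.

Lemma ssc_if (V : zmodType) (b : bool) n (u : V) :
  ssc n (if b then u else 0) = if b then ssc n u else 0.
Proof. by case: b; rewrite ?ssc0. Qed.

Section Additive.
Variables (V W : zmodType) (h : V -> W).
Hypothesis hD : forall x y, h (x + y) = h x + h y.
Lemma ad0 : h 0 = 0.
Proof. have e := hD 0 0; rewrite addr0 in e. by apply: (addrI (h 0)); rewrite addr0 -e. Qed.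
Lemma adN x : h (- x) = - h x.
Proof. apply: (addrI (h x)); by rewrite -hD !subrr ad0. Qed.
Lemma adB x y : h (x - y) = h x - h y.
Proof. by rewrite hD adN. Qed.
Lemma ad_sum (I : Type) (r : seq I) (P : pred I) (F : I -> V) :
  h (\sum_(i <- r | P i) F i) = \sum_(i <- r | P i) h (F i).
Proof. elim/big_rec2: _ => [|i y1 y2 _ <-]; by rewrite ?ad0 ?hD. Qed.
Lemma ad_ssc n x : h (ssc n x) = ssc n (h x).
Proof. by rewrite /ssc; case: (sgz_pm n) => ->; rewrite ?mulr1z ?mulrN1z ?adN. Qed.
Lemma ad_if (b : bool) x : h (if b then x else 0) = if b then h x else 0.
Proof. by case: b; rewrite ?ad0. Qed.
End Additive.

Section Multiadd.
Variables (C V W : zmodType) (f : V -> seq C -> W).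
Hypothesis Hf : multiadd f.
Lemma ma1 cs : forall x y, f (x + y) cs = f x cs + f y cs.
Proof. by move=> x y; case: Hf => h _; apply: h. Qed.
Lemma ma_zero a cs i : (i < size cs)%N -> nth 0 cs i = 0 -> f a cs = 0.
Proof.
move=> hi h0; case: Hf => _ h.
have e := h a cs i 0 0 hi; rewrite addr0 in e.
have ecs : set_nth 0 cs i 0 = cs.
  apply: (@eq_from_nth _ 0); first by rewrite size_set_nth; apply/maxn_idPr.
  by move=> k hk; rewrite nth_set_nth /=; case: eqP => // ->.
rewrite ecs in e.
by apply: (addrI (f a cs)); rewrite addr0 -e.
Qed.
Lemma ma_zero_in a cs : 0 \in cs -> f a cs = 0.
Proof.
move=> h; apply: (@ma_zero a cs (index 0 cs)); first by rewrite index_mem.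
by rewrite nth_index.
Qed.
Lemma ma_setD a cs i c c' : (i < size cs)%N ->
  f a (set_nth 0 cs i (c + c')) = f a (set_nth 0 cs i c) + f a (set_nth 0 cs i c').
Proof. by case: Hf => _ h; apply: h. Qed.
Lemma ma_set0 a cs i : (i < size cs)%N -> f a (set_nth 0 cs i 0) = 0.
Proof.
move=> hi; apply: (@ma_zero a _ i); first by rewrite size_set_nth; lia.
by rewrite nth_set_nth /= eqxx.
Qed.
Lemma ma_set_sum a cs i (I : Type) (r : seq I) (P : pred I) (F : I -> C) :
  (i < size cs)%N ->
  f a (set_nth 0 cs i (\sum_(j <- r | P j) F j)) = \sum_(j <- r | P j) f a (set_nth 0 cs i (F j)).
Proof.
move=> hi; elim/big_rec2: _ => [|j y1 y2 _ <-]; first by rewrite ma_set0.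
by rewrite ma_setD.
Qed.
Lemma ma_setN a cs i c : (i < size cs)%N ->
  f a (set_nth 0 cs i (- c)) = - f a (set_nth 0 cs i c).
Proof.
move=> hi; apply: (addrI (f a (set_nth 0 cs i c))).
by rewrite -ma_setD // !subrr ma_set0.
Qed.
Lemma ma_set_ssc a cs i n c : (i < size cs)%N ->
  f a (set_nth 0 cs i (ssc n c)) = ssc n (f a (set_nth 0 cs i c)).
Proof.
by move=> hi; rewrite /ssc; case: (sgz_pm n) => ->; rewrite ?mulr1z ?mulrN1z ?ma_setN.
Qed.
End Multiadd.

Fixpoint PS (T : finType) (W : zmodType) (n : nat) (F : seq T -> W) : W :=
  match n with
  | 0 => F [::]
  | n'.+1 => \sum_(z : T) PS n' (fun zs => F (z :: zs))
  end.

Section PSlemmas.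
Variables (T : finType) (W : zmodType).
Implicit Types (F G : seq T -> W).

Lemma PS_ext n F G : (forall s, size s = n -> F s = G s) -> PS n F = PS n G.
Proof.
elim: n F G => [|n IH] F G h /=; first by apply: h.
by apply: eq_bigr => z _; apply: IH => s hs; apply: h; rewrite /= hs.
Qed.

Lemma PS_map (W' : zmodType) (h : W -> W') (hD : forall x y, h (x + y) = h x + h y) n F :
  h (PS n F) = PS n (fun s => h (F s)).
Proof.
elim: n F => [|n IH] F //=; rewrite (ad_sum hD); apply: eq_bigr => z _; exact: IH.
Qed.

Lemma PS_add n F G : PS n (fun s => F s + G s) = PS n F + PS n G.
Proof.
elim: n F G => [|n IH] F G //=; rewrite -big_split /=; apply: eq_bigr => z _; exact: IH.
Qed.

Lemma PS0 n : PS n (fun _ : seq T => (0 : W)) = 0.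
Proof. by elim: n => [|n IH] //=; rewrite big1. Qed.

Lemma PS_sum (I : Type) (r : seq I) (P : pred I) n (F : I -> seq T -> W) :
  PS n (fun s => \sum_(i <- r | P i) F i s) = \sum_(i <- r | P i) PS n (F i).
Proof.
elim: r => [|i r IH]; first by rewrite big_nil (PS_ext (G := fun _ => 0)) ?PS0 // => s _; rewrite big_nil.
rewrite big_cons -IH.
rewrite (PS_ext (G := fun s => (if P i then F i s else 0) + \sum_(j <- r | P j) F j s)); last first.
  by move=> s _; rewrite big_cons; case: (P i); rewrite ?add0r.
rewrite PS_add; case: (P i) => //.
by rewrite PS0 add0r.
Qed.

Lemma PS_ssc n k F : ssc k (PS n F) = PS n (fun s => ssc k (F s)).
Proof. exact: (PS_map (@sscD W k)). Qed.

Lemma PS_cat a b F : PS (a + b) F = PS a (fun s => PS b (fun t => F (s ++ t))).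
Proof.
elim: a F => [|a IH] F //=; apply: eq_bigr => z _; exact: IH.
Qed.

Lemma PS1 F : PS 1 F = \sum_z F [:: z].
Proof. by []. Qed.

Lemma PS_tuple n F : \sum_(zs : n.-tuple T) F zs = PS n F.
Proof.
elim: n F => [|n IH] F /=.
  rewrite (eq_bigr (fun _ => F [::])); last by move=> t _; rewrite tuple0.
  by rewrite sumr_const card_tuple expn0.
rewrite (reindex (fun p : T * n.-tuple T => [tuple of p.1 :: p.2])) /=; last first.
  exists (fun t : n.+1.-tuple T => (thead t, [tuple of behead t])).
    by move=> [z t] _ /=; congr pair; apply: val_inj.
  by move=> t _; apply: val_inj => /=; case: t => [[|z s] //=].
rewrite -(pair_big xpredT xpredT (fun z (t : n.-tuple T) => F (z :: t))) /=.
by apply: eq_bigr => z _; rewrite (IH (fun s => F (z :: s))). Qed.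
End PSlemmas.

Lemma sum_recr (W : zmodType) n (F : 'I_n.+1 -> W) :
  \sum_(i < n.+1) F i = \sum_(i < n) F (widen_ord (leqnSn n) i) + F ord_max.
Proof. exact: big_ord_recr. Qed.
Lemma sum_recl (W : zmodType) n (F : 'I_n.+1 -> W) :
  \sum_(i < n.+1) F i = F ord0 + \sum_(i < n) F (lift ord0 i).
Proof. exact: big_ord_recl. Qed.

Lemma ssc_pp (V : zmodType) (p : int) (x : V) : ssc p (ssc p x) = x.
Proof. by rewrite ssc_ssc (@ssc_eq _ _ 0) ?ssc_0 //; lia. Qed.
Lemma ssc_pp1 (V : zmodType) (p : int) (x : V) : ssc p (ssc (p - 1) x) = - x.
Proof. by rewrite ssc_ssc (@ssc_eq _ _ (0 + 1)) ?ssc_1 ?ssc_0 //; lia. Qed.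
Lemma ssc1N (V : zmodType) (x : V) : ssc 1 x = - x.
Proof. by rewrite -(add0r 1) ssc_1 ssc_0. Qed.
Lemma zmod_fin (V : zmodType) (a b c d : V) : a + b = - c + d -> a - d = - b - c.
Proof.
move=> h; rewrite -[a](addrK b) h.
by rewrite addrAC addrK addrC.
Qed.

Section Msgn.
Variables (T : finType) (ind : T -> nat).

Lemma msgn_nil p x : msgn ind p x [::] = 0.
Proof. by rewrite /msgn big_ord0. Qed.

Lemma msgn_cons p x z zs :
  msgn ind p x (z :: zs) = (p - (ind x)%:Z) + msgn ind (p - 1) z zs.
Proof.
rewrite /msgn /= big_ord_recl /= subr0; congr (_ + _).
apply: eq_bigr => k _; rewrite /bump /= add1n.
rewrite add0n (set_nth_default z x) /=; last by apply: (leq_trans (ltn_ord k)). rewrite -addn1 PoszD; lia.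


Qed.

Lemma msgn_cat p x s t :
  msgn ind p x (s ++ t) = msgn ind p x s + msgn ind (p - (size s)%:Z) (last x s) t.
Proof.
elim: s p x => [|z s IH] p x /=; first by rewrite msgn_nil add0r subr0.
rewrite !msgn_cons IH addrA; congr (_ + msgn _ _ _ _).
by rewrite -addn1 PoszD; lia.
Qed.

Lemma msgn_shift p d x zs :
  msgn ind (p + d) x zs = msgn ind p x zs + d * (size zs)%:Z.
Proof.
elim: zs p x => [|z zs IH] p x /=; first by rewrite !msgn_nil mulr0 addr0.
rewrite !msgn_cons (_ : p + d - 1 = (p - 1) + d); last by lia.
rewrite IH; rewrite -addn1 PoszD; lia.
Qed.

End Msgn.
Lemma msgn_map (T : finType) (ind : T -> nat) (T' : finType) (ind' : T' -> nat) (f : T -> T') p x zs :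
  (forall t, ind' (f t) = ind t) -> msgn ind' p (f x) (map f zs) = msgn ind p x zs.
Proof.
move=> h; elim: zs p x => [|z zs IH] p x /=; first by rewrite !msgn_nil.
by rewrite !msgn_cons IH h.
Qed.

Lemma msgn_indS (T : finType) (ind : T -> nat) (ind' : T -> nat) p x zs :
  (forall t, ind' t = (ind t).+1) -> msgn ind' p x zs = msgn ind (p - 1) x zs.
Proof.
move=> h; elim: zs p x => [|z zs IH] p x /=; first by rewrite !msgn_nil.
rewrite !msgn_cons IH h; congr (_ + _); rewrite -addn1 PoszD; lia.
Qed.

Lemma pairmap_map (T T' U : Type) (f : T -> T') (M : T' -> T' -> U) x s :
  pairmap M (f x) (map f s) = pairmap (fun a b => M (f a) (f b)) x s.
Proof. by elim: s x => [|z s IH] x //=; rewrite IH. Qed.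

Lemma sum_pairmap_deg (T : Type) (ind : T -> nat) x s :
  \sum_(q <- pairmap (fun a b => (ind a)%:Z - (ind b)%:Z - 1) x s) q
  = (ind x)%:Z - (ind (last x s))%:Z - (size s)%:Z.
Proof.
elim: s x => [|z s IH] x /=; first by rewrite big_nil; lia.
rewrite big_cons IH; rewrite -addn1 PoszD; lia.
Qed.

Lemma homs_nil (V : zmodType) (hom : int -> V -> Prop) : homs hom [::] [::].
Proof. by split => // i. Qed.

Lemma homs_cons (V : zmodType) (hom : int -> V -> Prop) q qs c cs :
  hom q c -> homs hom qs cs -> homs hom (q :: qs) (c :: cs).
Proof.
move=> hc [hs h]; split; first by rewrite /= hs.
by case=> [|i] //= hi; apply: h.
Qed.

Lemma homs_cat (V : zmodType) (hom : int -> V -> Prop) qs cs qs' cs' :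
  homs hom qs cs -> homs hom qs' cs' -> homs hom (qs ++ qs') (cs ++ cs').
Proof.
move=> [h1 h2] [h3 h4]; split; first by rewrite !size_cat h1 h3.
move=> i; rewrite size_cat !nth_cat h1 => hi.
by case: ifP => hi'; [apply: h2 | apply: h4; lia].
Qed.

Lemma homs_pairmap (T : Type) (V : zmodType) (hom : int -> V -> Prop)
  (d : T -> T -> int) (M : T -> T -> V) x s :
  (forall a b, hom (d a b) (M a b)) -> homs hom (pairmap d x s) (pairmap M x s).
Proof.
move=> h; elim: s x => [|z s IH] x /=; first exact: homs_nil.
by apply: homs_cons.
Qed.

Section Graded.
Variables (V : zmodType) (hom : int -> V -> Prop).
Hypothesis Hg : graded hom.
Lemma hom0 d : hom d 0.
Proof. by case: Hg. Qed.
Lemma homB d x y : hom d x -> hom d y -> hom d (x - y).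
Proof. by case: Hg => _ [h _]; apply: h. Qed.
Lemma homN d x : hom d x -> hom d (- x).
Proof. by move=> h; rewrite -sub0r; apply: homB => //; apply: hom0. Qed.
Lemma homD d x y : hom d x -> hom d y -> hom d (x + y).
Proof. by move=> hx hy; rewrite -[y]opprK; apply: homB => //; apply: homN. Qed.
Lemma hom_ssc d n x : hom d x -> hom d (ssc n x).
Proof. by move=> h; rewrite /ssc; case: (sgz_pm n) => ->; rewrite ?mulr1z ?mulrN1z //; apply: homN. Qed.
Lemma hom_sum d (I : Type) (r : seq I) (P : pred I) (F : I -> V) :
  (forall i, P i -> hom d (F i)) -> hom d (\sum_(i <- r | P i) F i).
Proof. by move=> h; elim/big_rec: _ => [|i x Pi hx]; [apply: hom0 | apply: homD => //; apply: h]. Qed.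
Lemma hom_if d (b : bool) x : (b -> hom d x) -> hom d (if b then x else 0).
Proof. by case: b => h; [apply: h | apply: hom0]. Qed.
Lemma hom_eq d e x : d = e -> hom d x -> hom e x.
Proof. by move=> ->. Qed.
End Graded.

Lemma PS_hom (T : finType) (V : zmodType) (hom : int -> V -> Prop) (Hg : graded hom) d n (F : seq T -> V) :
  (forall s, size s = n -> hom d (F s)) -> hom d (PS n F).
Proof.
elim: n F => [|n IH] F h /=; first by apply: h.
apply: hom_sum => // z _; apply: IH => s hs; apply: h; by rewrite /= hs.
Qed.

Lemma sum_bound (W : zmodType) (F : nat -> W) B N1 N2 :
  (forall n, (B <= n)%N -> F n = 0) -> (B <= N1)%N -> (B <= N2)%N ->
  \sum_(n < N1) F n = \sum_(n < N2) F n.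
Proof.
move=> h h1 h2.
suff e : forall N, (B <= N)%N -> \sum_(n < N) F n = \sum_(n < B) F n.
  by rewrite !e.
move=> N hN; rewrite -!(big_mkord xpredT) (big_cat_nat (n := B)) //=.
rewrite [X in _ + X](_ : _ = 0) ?addr0 //.
by rewrite big_nat_cond big1 // => i /andP[/andP[hi _] _]; exact: h hi.
Qed.

Lemma tri_aux (W : zmodType) N (H : nat -> nat -> W) :
  \sum_(a < N) \sum_(b < (N - a)%N) H a b = \sum_(n < N) \sum_(k < n.+1) H k (n - k)%N.
Proof.
elim: N => [|N IH]; first by rewrite !big_ord0.
rewrite big_ord_recr [RHS]big_ord_recr /= -IH.
rewrite (eq_bigr (fun a : 'I_N => \sum_(b < (N - a)%N) H a b + H a (N - a)%N)); last first.
  move=> a _; rewrite subSn; last by apply: ltnW.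
  by rewrite big_ord_recr.
rewrite big_split /= -addrA; congr (_ + _).
by rewrite [RHS]big_ord_recr /= subnn subSnn big_ord1.
Qed.

Lemma tri (W : zmodType) N (H : nat -> nat -> W) :
  (forall a b, (N <= a + b)%N -> H a b = 0) ->
  \sum_(a < N) \sum_(b < N) H a b = \sum_(n < N) \sum_(k < n.+1) H k (n - k)%N.
Proof.
move=> h; rewrite -tri_aux; apply: eq_bigr => a _.
apply: (@sum_bound _ (H a) (N - a)%N) => // [n hn|]; last by apply: leq_subr.
apply: h; have := ltn_ord a; lia.
Qed.

Lemma sum_if_eq (T : finType) (W : zmodType) (a : T) (F : T -> W) :
  \sum_x (if a == x then F x else 0) = F a.
Proof.
rewrite -big_mkcond /= (eq_bigl (fun x => x == a)); last by move=> x; rewrite eq_sym.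
by rewrite big_pred1_eq.
Qed.

Lemma PS_swap (T : finType) (W : zmodType) a b (F : seq T -> seq T -> W) :
  PS a (fun s => PS b (fun t => F s t)) = PS b (fun t => PS a (fun s => F s t)).
Proof.
elim: a F => [|a IH] F /=; first by [].
transitivity (\sum_z PS b (fun t => PS a (fun s => F (z :: s) t))).
  by apply: eq_bigr => z _; exact: (IH (fun s t => F (z :: s) t)).
by rewrite PS_sum.
Qed.

Section Gen.
Variables (C : zmodType) (Chom : int -> C -> Prop) (mu1 : C -> C) (mu2 : C -> C -> C).
Hypothesis HC : Ainf_alg Chom mu1 mu2.
Variables (T : finType) (ind : T -> nat) (M : T -> T -> C).
Hypothesis HMdeg : forall x y, Chom ((ind x)%:Z - (ind y)%:Z - 1) (M x y).

Lemma Chom_neg d c : d < 0 -> Chom d c -> c = 0.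
Proof. by case: HC => _ [h _]; apply: h. Qed.

Lemma M_zero a b : (ind a <= ind b)%N -> M a b = 0.
Proof. move=> h; apply: (@Chom_neg _ _ _ (HMdeg a b)); lia. Qed.

Lemma long_zero x zs : (#|T| <= size zs)%N -> 0 \in pairmap M x zs.
Proof.
move=> hs; apply/negPn/negP => h0.
have hp : path (fun a b => ind b < ind a)%N x zs.
  elim: zs x h0 {hs} => [|z zs IH] x //= h0.
  rewrite in_cons negb_or in h0; case/andP: h0 => h1 h2.
  rewrite IH // andbT ltnNge; apply/negP => hle.
  by move: h1; rewrite M_zero ?eqxx.
have hu : uniq (x :: zs).
  apply: (@sorted_uniq _ (fun a b => ind b < ind a)%N) => //.
  - by move=> a b c /= h1 h2; apply: ltn_trans h1.
  - by move=> a /=; rewrite ltnn.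
by have := max_card (mem (x :: zs)); rewrite (card_uniqP hu) /= ltnNge hs.
Qed.

Definition twN N (V W : zmodType) (g : V -> seq C -> W) p (v : T -> V) y : W :=
  \sum_(n < N) \sum_x PS n (fun zs => if last x zs == y
      then ssc (msgn ind p x zs) (g (v x) (pairmap M x zs)) else 0).

Lemma tw_twN (V W : zmodType) (g : V -> seq C -> W) p (v : {ffun T -> V}) y :
  tw ind M g p v y = twN #|T|.+1 g p v y.
Proof.
rewrite /tw ffunE /twN; apply: eq_bigr => n _; apply: eq_bigr => x _.
by rewrite big_mkcond /= (PS_tuple n (fun zs => if last x zs == y
      then ssc (msgn ind p x zs) (g (v x) (pairmap M x zs)) else 0)).
Qed.

Lemma twN_bound N (V W : zmodType) (g : V -> seq C -> W) (Hg : multiadd g) p v y :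
  (#|T| < N)%N -> twN N g p v y = twN #|T|.+1 g p v y.
Proof.
move=> hN; rewrite /twN.
apply: (@sum_bound _ (fun n => \sum_x PS n (fun zs => if last x zs == y
      then ssc (msgn ind p x zs) (g (v x) (pairmap M x zs)) else 0)) #|T|) => //.
move=> n hn; apply: big1 => x _.
rewrite (PS_ext (G := fun _ => 0)) ?PS0 // => s hs.
rewrite (ma_zero_in Hg) ?ssc0; first by case: ifP.
by apply: long_zero; rewrite hs.
exact: ltnW.
Qed.

Lemma twN_ext N (V W : zmodType) (g : V -> seq C -> W) p v w y :
  (forall x, v x = w x) -> twN N g p v y = twN N g p w y.
Proof.
move=> h; apply: eq_bigr => n _; apply: eq_bigr => x _; by rewrite h.
Qed.

Lemma twN_add N (V W : zmodType) (g : V -> seq C -> W) (Hg : multiadd g) p v w y :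
  twN N g p (fun x => v x + w x) y = twN N g p v y + twN N g p w y.
Proof.
rewrite /twN -big_split; apply: eq_bigr => n _; rewrite -big_split; apply: eq_bigr => x _.
rewrite /= -PS_add; apply: PS_ext => s _.
by case: ifP; rewrite ?addr0 // (ma1 Hg) sscD.
Qed.

Lemma twN_ssc N (V W : zmodType) (g : V -> seq C -> W) (Hg : multiadd g) p k v y :
  twN N g p (fun x => ssc k (v x)) y = ssc k (twN N g p v y).
Proof.
rewrite /twN ssc_sum; apply: eq_bigr => n _; rewrite ssc_sum; apply: eq_bigr => x _.
rewrite PS_ssc; apply: PS_ext => s _.
case: ifP; rewrite ?ssc0 // (ad_ssc (fun a b => ma1 Hg _ a b)) !ssc_ssc => _; by rewrite addrC.
Qed.

Lemma twN_0 N (V W : zmodType) (g : V -> seq C -> W) (Hg : multiadd g) p y :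
  twN N g p (fun _ => 0) y = 0.
Proof.
rewrite /twN big1 // => n _; rewrite big1 // => x _.
rewrite (PS_ext (G := fun _ => 0)) ?PS0 // => s _.
by rewrite (ad0 (fun a b => ma1 Hg _ a b)) ssc0; case: ifP.
Qed.
End Gen.

Section Comp.
Variables (C : zmodType) (Chom : int -> C -> Prop) (mu1 : C -> C) (mu2 : C -> C -> C).
Hypothesis HC : Ainf_alg Chom mu1 mu2.
Variables (T : finType) (ind : T -> nat) (M : T -> T -> C).
Hypothesis HMdeg : forall x y, Chom ((ind x)%:Z - (ind y)%:Z - 1) (M x y).

Lemma PS_zero (W : zmodType) n (F : seq T -> W) : (forall s, size s = n -> F s = 0) -> PS n F = 0.
Proof. by move=> h; rewrite (PS_ext (G := fun _ => 0)) ?PS0. Qed.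

Lemma twN_comp N (U V W : zmodType) (g1 : V -> seq C -> U) (g2 : U -> seq C -> W)
  (H1 : multiadd g1) (H2 : multiadd g2) p q (v : T -> V) (u : T -> U) y :
  (#|T| < N)%N -> (forall x, u x = twN ind M N g1 p v x) ->
  twN ind M N g2 q u y = \sum_x \sum_(n < N) PS n (fun zs => if last x zs == y then
    ssc (msgn ind p x zs) (\sum_(k < n.+1) ssc ((n - k)%N%:Z * ((k : nat)%:Z + q - p))
      (g2 (g1 (v x) (take k (pairmap M x zs))) (drop k (pairmap M x zs)))) else 0).
Proof.
move=> hN hu.
pose E x x' zs1 zs2 := if (last x zs1 == x') && (last x' zs2 == y) then
   ssc (msgn ind p x zs1 + msgn ind q x' zs2) (g2 (g1 (v x) (pairmap M x zs1)) (pairmap M x' zs2)) else 0.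
have E1 : twN ind M N g2 q u y = \sum_(n2 < N) \sum_(n1 < N) \sum_x \sum_x'
    PS n2 (fun zs2 => PS n1 (fun zs1 => E x x' zs1 zs2)).
  rewrite /twN; apply: eq_bigr => n2 _.
  transitivity (\sum_x' \sum_(n1 < N) \sum_x PS n2 (fun zs2 => PS n1 (fun zs1 => E x x' zs1 zs2))); last first.
    rewrite exchange_big; apply: eq_bigr => n1 _; exact: exchange_big.
  apply: eq_bigr => x' _.
  under [RHS]eq_bigr do rewrite -PS_sum.
  rewrite -PS_sum; apply: PS_ext => zs2 _.
  case: (boolP (last x' zs2 == y)) => hy.
    pose h a := ssc (msgn ind q x' zs2) (g2 a (pairmap M x' zs2)).
    have hD : forall a b, h (a + b) = h a + h b by move=> a b; rewrite /h (ma1 H2) sscD.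
    rewrite -/(h _) hu /twN (ad_sum hD); apply: eq_bigr => n1 _; rewrite (ad_sum hD).
    apply: eq_bigr => x _; rewrite (PS_map hD); apply: PS_ext => zs1 _.
    rewrite (ad_if hD) /E hy andbT; case: ifP => // _.
    by rewrite /h (ad_ssc (fun a b => ma1 H2 _ a b)) ssc_ssc addrC.
  rewrite big1 // => n1 _; rewrite big1 // => x _; apply: PS_zero => zs1 _.
  by rewrite /E (negbTE hy) andbF.
pose Ek x k s := if last x s == y then
   ssc (msgn ind p x s + (size s - k)%N%:Z * ((k : nat)%:Z + q - p))
     (g2 (g1 (v x) (take k (pairmap M x s))) (drop k (pairmap M x s))) else 0.
have E2 : forall n1 n2 x, \sum_x' PS n2 (fun zs2 => PS n1 (fun zs1 => E x x' zs1 zs2))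
    = PS (n1 + n2)%N (Ek x n1).
  move=> n1 n2 x; rewrite PS_cat.
  under eq_bigr do rewrite PS_swap.
  rewrite -PS_sum; apply: PS_ext => zs1 hz1.
  rewrite -PS_sum; apply: PS_ext => zs2 hz2.
  rewrite /E (eq_bigr (fun x' => if last x zs1 == x' then
     (if last x' zs2 == y then ssc (msgn ind p x zs1 + msgn ind q x' zs2)
       (g2 (g1 (v x) (pairmap M x zs1)) (pairmap M x' zs2)) else 0) else 0)); last first.
    by move=> x' _; case: (last x zs1 == x').
  rewrite sum_if_eq /Ek last_cat; case: ifP => // _.
  rewrite pairmap_cat take_size_cat ?size_pairmap // drop_size_cat ?size_pairmap //.
  congr ssc; rewrite msgn_cat size_cat hz1 hz2 addKn.
  have hq := msgn_shift ind (p - n1%:Z) (q - p + n1%:Z) (last x zs1) zs2.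
  rewrite (_ : p - n1%:Z + (q - p + n1%:Z) = q) in hq; last by lia.
  rewrite hq hz2; ring.
rewrite E1 exchange_big /=.
rewrite (eq_bigr (fun n1 : 'I_N => \sum_x \sum_(n2 < N) PS (n1 + n2)%N (Ek x n1))); last first.
  move=> n1 _; rewrite exchange_big; apply: eq_bigr => x _; apply: eq_bigr => n2 _; exact: E2.
rewrite exchange_big; apply: eq_bigr => x _.
rewrite (tri (H := fun a b => PS (a + b)%N (Ek x a))); last first.
  move=> a b hab; apply: PS_zero => s hs; rewrite /Ek; case: ifP => // _.
  have h0 : 0 \in pairmap M x s by apply: (long_zero HC HMdeg); rewrite hs; apply: leq_trans hab; exact: ltnW.
  rewrite -(cat_take_drop a (pairmap M x s)) mem_cat in h0.
  case/orP: h0 => h0.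
    by rewrite (ma_zero_in H1 _ h0) (ad0 (fun a b => ma1 H2 _ a b)) ssc0.
  by rewrite (ma_zero_in H2 _ h0) ssc0.
apply: eq_bigr => n _.
rewrite (eq_bigr (fun k : 'I_n.+1 => PS n (Ek x k))); last by move=> k _; rewrite subnKC // -ltnS.
rewrite -PS_sum; apply: PS_ext => s hs.
rewrite /Ek; case: ifP => _; last by rewrite big1.
rewrite ssc_sum; apply: eq_bigr => k _; by rewrite ssc_ssc hs.
Qed.
End Comp.

Lemma set_nth_mid (C : zmodType) (s1 t : seq C) c c2 :
  set_nth 0 (s1 ++ c :: t) (size s1) c2 = s1 ++ c2 :: t.
Proof. by elim: s1 => [|a s1 IH] //=; rewrite IH. Qed.

Section MidLemmas.
Variables (C V W : zmodType) (g : V -> seq C -> W).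
Hypothesis Hg : multiadd g.
Lemma ma_mid_sum a s1 t (I : Type) (r : seq I) (P : pred I) (F : I -> C) :
  g a (s1 ++ (\sum_(i <- r | P i) F i) :: t) = \sum_(i <- r | P i) g a (s1 ++ F i :: t).
Proof.
rewrite -(set_nth_mid s1 t 0) (ma_set_sum Hg); last by rewrite size_cat /=; lia.
by apply: eq_bigr => i _; rewrite set_nth_mid.
Qed.
Lemma ma_mid_ssc a s1 t n c :
  g a (s1 ++ ssc n c :: t) = ssc n (g a (s1 ++ c :: t)).
Proof.
rewrite -(set_nth_mid s1 t 0) (ma_set_ssc Hg); last by rewrite size_cat /=; lia.
by rewrite set_nth_mid.
Qed.
End MidLemmas.

Lemma muA_big (C : zmodType) (mu1 : C -> C) (mu2 : C -> C -> C) l :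
  (2 < size l)%N -> muA mu1 mu2 l = 0.
Proof. by case: l => [|a [|b [|c l]]]. Qed.

Lemma PS_split3 (T : finType) (W : zmodType) n j (F : seq T -> W) : (j < n)%N ->
  PS n F = PS j (fun l => \sum_z PS (n - j - 1)%N (fun r => F (l ++ z :: r))).
Proof.
move=> hj; have e : n = (j + (n - j - 1).+1)%N by lia.
by rewrite {1}e PS_cat.
Qed.

Lemma PS_split4 (T : finType) (W : zmodType) n j (F : seq T -> W) : (j < n)%N ->
  PS n.+1 F = PS j (fun l => \sum_w \sum_z PS (n - j - 1)%N (fun r => F (l ++ w :: z :: r))).
Proof.
move=> hj; have e : n.+1 = (j + (n - j - 1).+2)%N by lia.
by rewrite {1}e PS_cat.
Qed.

Lemma mid_take (X : Type) (s1 t : seq X) j : size s1 = j -> take j (s1 ++ t) = s1.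
Proof. exact: take_size_cat. Qed.
Lemma mid_nth (X : Type) (d : X) (s1 t : seq X) c j : size s1 = j -> nth d (s1 ++ c :: t) j = c.
Proof. by move=> <-; rewrite nth_cat ltnn subnn. Qed.
Lemma mid_nth2 (X : Type) (d : X) (s1 t : seq X) c c' j : size s1 = j -> nth d (s1 ++ c :: c' :: t) j.+1 = c'.
Proof. by move=> <-; rewrite nth_cat ltnNge leqnSn /= subSnn. Qed.
Lemma mid_drop1 (X : Type) (s1 t : seq X) c j : size s1 = j -> drop j.+1 (s1 ++ c :: t) = t.
Proof. by move=> <-; rewrite drop_cat ltnNge leqnSn /= subSnn /= drop0. Qed.
Lemma mid_drop2 (X : Type) (s1 t : seq X) c c' j : size s1 = j -> drop j.+2 (s1 ++ c :: c' :: t) = t.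
Proof. by move=> <-; rewrite drop_cat ltnNge (leq_trans (leqnSn _) (leqnSn _)) /= -addn2 addKn /= drop0. Qed.

Definition MUt (C V W : zmodType) (mu1 : C -> C) (mu2 : C -> C -> C) (g : V -> seq C -> W)
  (a : V) (pa : int) (qs : seq int) (cs : seq C) : W :=
  \sum_(j < size cs) \sum_(s < (size cs - j)%N)
        ssc ((j.+1)%:Z + (s.+1 * (size cs - j - s.+1))%N%:Z
              + ((s.+1)%:Z - 2) * (pa + \sum_(q <- take j qs) q))
            (g a (take j cs ++ muA mu1 mu2 (take s.+1 (drop j cs))
                              :: drop (j + s.+1) cs)).

Section Mu.
Variables (C : zmodType) (Chom : int -> C -> Prop) (mu1 : C -> C) (mu2 : C -> C -> C).
Hypothesis HC : Ainf_alg Chom mu1 mu2.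
Variables (T : finType) (ind : T -> nat) (M : T -> T -> C).
Hypothesis HM : twisting_cocycle Chom mu1 mu2 ind M.
Variables (V W : zmodType) (g : V -> seq C -> W).
Hypothesis Hg : multiadd g.

Let dM := fun a b : T => (ind a)%:Z - (ind b)%:Z - 1.

Lemma MUt_split a pa qs cs :
  MUt mu1 mu2 g a pa qs cs = \sum_(j < size cs)
    (ssc ((j.+1)%:Z + (size cs - j - 1)%N%:Z - (pa + \sum_(q <- take j qs) q))
        (g a (take j cs ++ mu1 (nth 0 cs j) :: drop j.+1 cs))
     + if (j.+1 < size cs)%N then ssc (j.+1)%:Z
        (g a (take j cs ++ mu2 (nth 0 cs j) (nth 0 cs j.+1) :: drop j.+2 cs)) else 0).
Proof.
rewrite /MUt; apply: eq_bigr => j _.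
have hj := ltn_ord j.
case e : (size cs - j)%N => [|m]; first by lia.
rewrite big_ord_recl /=.
rewrite (drop_nth 0) // /= addn1; congr (_ + _).
  rewrite take0 /=; apply: ssc_eq; rewrite mul1n; lia.
case: m e => [|m] e.
  by rewrite big_ord0; case: ifP => //; lia.
have hj1 : (j.+1 < size cs)%N by lia.
rewrite hj1 big_ord_recl /= (drop_nth 0 hj1) /= addn2.
rewrite [X in _ + X](_ : _ = 0) ?addr0.
  rewrite /bump /= add0n take0 /=; apply: ssc_eq; lia.
apply: big1 => s _; rewrite (ma_zero_in Hg) ?ssc0 //.
have hj2 : (j.+2 < size cs)%N by have := ltn_ord s; lia.
by rewrite (drop_nth 0 hj2) /bump /= mem_cat in_cons eqxx orbT.
Qed.

Variables (a : V) (x y : T) (p : int).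
Let pa := p - (ind x)%:Z.

Definition FA n j zs := let cs := pairmap M x zs in
  if last x zs == y then ssc (msgn ind p x zs + ((j.+1)%:Z + (n - j - 1)%N%:Z
      - (pa + \sum_(q <- take j (pairmap dM x zs)) q)))
    (g a (take j cs ++ mu1 (nth 0 cs j) :: drop j.+1 cs)) else 0.
Definition FB n j zs := let cs := pairmap M x zs in
  if last x zs == y then (if (j.+1 < n)%N then ssc (msgn ind p x zs + (j.+1)%:Z)
    (g a (take j cs ++ mu2 (nth 0 cs j) (nth 0 cs j.+1) :: drop j.+2 cs)) else 0) else 0.

Lemma mu2_0l b : mu2 0 b = 0.
Proof. case: HC => _ [_ [_ [h _]]]; apply: (@ad0 _ _ (fun u => mu2 u b)) => u v; exact: h. Qed.
Lemma mu2_0r b : mu2 b 0 = 0.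
Proof. case: HC => _ [_ [_ [_ [h _]]]]; apply: (@ad0 _ _ (fun u => mu2 b u)) => u v; exact: h. Qed.

Lemma key n j : (j < n)%N -> PS n (FA n j) = - PS n.+1 (FB n.+1 j).
Proof.
move=> hj; rewrite (PS_split3 _ hj) (PS_split4 _ hj) (PS_map (h := -%R)); last by move=> u v; rewrite opprD.
apply: PS_ext => l hl; rewrite exchange_big -sumrN; apply: eq_bigr => z _.
rewrite -PS_sum (PS_map (h := -%R)); last by move=> u v; rewrite opprD.
apply: PS_ext => r hr.
rewrite /FA /FB /= !last_cat /=.
under [in RHS]eq_bigr do rewrite last_cat /=.
case: ifP => hy; last by rewrite big1 ?oppr0.
have hjn : (j.+1 < n.+1)%N by [].
rewrite -sumrN.
rewrite !pairmap_cat /= !mid_take ?size_pairmap // !mid_nth ?mid_nth2 ?size_pairmap //.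
rewrite mid_drop1 ?mid_drop2 ?size_pairmap //.
case: HM => _ Hco; rewrite Hco (ma_mid_sum Hg) ssc_sum; apply: eq_bigr => w _.
rewrite (ma_mid_ssc Hg) ssc_ssc hjn -ssc_1.
have hl' : size (pairmap M x l) = j by rewrite size_pairmap.
rewrite pairmap_cat /= (mid_take _ hl') (mid_nth2 _ _ _ _ hl') (mid_nth _ _ _ hl') (mid_drop2 _ _ _ hl').
apply: ssc_eq.
rewrite sum_pairmap_deg hl !msgn_cat /= !msgn_cons hl.
have hs := msgn_shift ind (p - j%:Z - 1) (-1) z r.
rewrite hs hr /pa; lia.
Qed.

Definition Bs n := \sum_(j < n) PS n (FB n j).

Lemma Bs_N N : (#|T| < N)%N -> Bs N = 0.
Proof.
move=> hN; apply: big1 => j _; apply: PS_zero => zs hz.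
rewrite /FB; case: ifP => // _; case: ifP => // hj.
have h0 : 0 \in pairmap M x zs.
  apply: (long_zero HC (ind := ind)); first by case: HM.
  by rewrite hz; apply: ltnW.
set cs := pairmap M x zs in h0 *.
have hs : size cs = N by rewrite size_pairmap.
have hj0 : (j < size cs)%N by rewrite hs; apply: ltnW.
have hj1 : (j.+1 < size cs)%N by rewrite hs.
rewrite -(cat_take_drop j cs) mem_cat (drop_nth 0 hj0) (drop_nth 0 hj1) !in_cons in h0.
rewrite (ma_zero_in Hg) ?ssc0 //.
case/or3P: h0 => [h0|h0|]; first by rewrite mem_cat h0.
  by rewrite -(eqP h0) mu2_0l mem_cat in_cons eqxx orbT.
move=> /orP[h0|h0].
  by rewrite -(eqP h0) mu2_0r mem_cat in_cons eqxx orbT.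
by rewrite mem_cat in_cons h0 !orbT.
Qed.

Lemma mu_total N : (#|T| < N)%N ->
  \sum_(n < N) PS n (fun zs => if last x zs == y then ssc (msgn ind p x zs)
     (MUt mu1 mu2 g a (p - (ind x)%:Z) (pairmap dM x zs) (pairmap M x zs)) else 0) = 0.
Proof.
move=> hN.
have step1 : forall n, PS n (fun zs => if last x zs == y then ssc (msgn ind p x zs)
     (MUt mu1 mu2 g a (p - (ind x)%:Z) (pairmap dM x zs) (pairmap M x zs)) else 0)
   = \sum_(j < n) PS n (FA n j) + Bs n.
  move=> n; rewrite /Bs -!PS_sum -PS_add; apply: PS_ext => zs hz.
  rewrite /FA /FB /=; case: ifP => hy; last by rewrite !big1 ?addr0.
  rewrite MUt_split size_pairmap hz ssc_sum -big_split; apply: eq_bigr => j _ /=.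
  rewrite sscD ssc_if !ssc_ssc; congr (_ + _).
have step2 : forall n, \sum_(j < n) PS n (FA n j) = - Bs n.+1.
  move=> n; rewrite /Bs sum_recr.
  rewrite [X in _ + X](_ : _ = 0) ?addr0; last first.
    by apply: PS_zero => zs _; rewrite /FB ltnn; case: ifP.
  rewrite -sumrN; apply: eq_bigr => j _; exact: key.
rewrite (eq_bigr (fun n : 'I_N => Bs n - Bs n.+1)); last first.
  by move=> n _; rewrite step1 step2 addrC.
have tel : forall K, \sum_(n < K) (Bs n - Bs n.+1) = Bs 0 - Bs K.
  elim=> [|K IH]; first by rewrite big_ord0 subrr.
  by rewrite big_ord_recr /= IH addrA subrK.
by rewrite tel (Bs_N hN) /Bs big_ord0 subr0.
Qed.
End Mu.

Section CM.
Variables (C : zmodType) (Chom : int -> C -> Prop) (mu1 : C -> C) (mu2 : C -> C -> C).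
Hypothesis HC : Ainf_alg Chom mu1 mu2.
Variables (T : finType) (ind : T -> nat) (M : T -> T -> C).
Hypothesis HM : twisting_cocycle Chom mu1 mu2 ind M.
Variables (F : zmodType) (Fhom : int -> F -> Prop) (nuF : F -> seq C -> F)
  (G : zmodType) (Ghom : int -> G -> Prop) (nuG : G -> seq C -> G)
  (phi : F -> seq C -> G).
Hypothesis HnuF : multiadd nuF.
Hypothesis HnuG : multiadd nuG.
Hypothesis Hphi : Ainf_morphism Chom mu1 mu2 Fhom nuF Ghom nuG phi.

Lemma sgn_lemma (d : int) (A B : int) : A - B = 2 * d ->
  ~~ odd (absz (A - B)).
Proof. move=> ->; lia. Qed.

Lemma chain_map N p (v : T -> F) (u1 : T -> G) (u2 : T -> F) y :
  (#|T| < N)%N -> (forall x, Fhom (p - (ind x)%:Z) (v x)) ->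
  (forall x, u1 x = twN ind M N phi p v x) ->
  (forall x, u2 x = twN ind M N nuF p v x) ->
  twN ind M N nuG p u1 y = twN ind M N phi (p - 1) u2 y.
Proof.
have Hph : multiadd phi by case: Hphi.
have HMdeg : forall x y, Chom ((ind x)%:Z - (ind y)%:Z - 1) (M x y) by case: HM.
move=> hN hv hu1 hu2.
rewrite (twN_comp HC HMdeg Hph HnuG p y hN hu1) (twN_comp HC HMdeg HnuF Hph (p - 1) y hN hu2).
apply: eq_bigr => x _.
have hmu := mu_total HC HM Hph (v x) x y p hN.
rewrite -[RHS]addr0 -[X in _ = _ + X]hmu -big_split.
apply: eq_bigr => n _ /=; rewrite -PS_add; apply: PS_ext => zs hz /=.
case: ifP => hy; last by rewrite addr0.
rewrite -sscD; congr ssc.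
set cs := pairmap M x zs.
set qs := pairmap (fun a b => (ind a)%:Z - (ind b)%:Z - 1) x zs.
have hcs : size cs = n by rewrite size_pairmap.
have hq : homs Chom qs cs by apply: homs_pairmap; case: HM.
case: Hphi => _ [_ Hrel].
have hr : \sum_(s < (size cs).+1)
        ssc ((s.+1 * ((size cs).+1 - s.+1))%N%:Z) (phi (nuF (v x) (take s cs)) (drop s cs))
     + MUt mu1 mu2 phi (v x) (p - (ind x)%:Z) qs cs
     = \sum_(s < (size cs).+1)
        ssc ((s.+2 * ((size cs).+1 - s.+1))%N%:Z) (nuG (phi (v x) (take s cs)) (drop s cs))
  := Hrel _ _ _ _ (hv x) hq.
move: hr; rewrite hcs => hr.
rewrite (eq_bigr (fun k : 'I_n.+1 => ssc ((k.+2 * (n.+1 - k.+1))%N%:Z)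
   (nuG (phi (v x) (take k cs)) (drop k cs)))); last first.
  move=> k _; apply: ssc_eq.
  apply: (@sgn_lemma (- (n - k)%N%:Z)).
  rewrite subSS PoszM.
  have -> : ((k.+2)%N%:Z) = k%:Z + 2 by rewrite -addn2 PoszD.
  ring.
rewrite -hr; congr (_ + _); apply: eq_bigr => k _; apply: ssc_eq.
apply: (@sgn_lemma ((n - k)%N%:Z)).
rewrite subSS PoszM.
have -> : ((k.+1)%N%:Z) = k%:Z + 1 by rewrite -addn1 PoszD.
ring.
Qed.
End CM.

Section SumPaths.
Variables (C0 C1 : finType) (W : zmodType).
Definition isr (t : C0 + C1) : bool := if t is inr _ then true else false.
Fixpoint okp (s : seq (C0 + C1)) : bool :=
  match s with [::] => true | inl _ :: s' => okp s' | inr _ :: s' => all isr s' end.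

Lemma inr_eq (a b : C1) : (inr a == inr b :> C0 + C1) = (a == b).
Proof. by apply/eqP/eqP => [[]|->]. Qed.
Lemma inl_eq (a b : C0) : (inl a == inl b :> C0 + C1) = (a == b).
Proof. by apply/eqP/eqP => [[]|->]. Qed.
Lemma inlr_eq (a : C0) (b : C1) : (inl a == inr b :> C0 + C1) = false.
Proof. by []. Qed.
Lemma inrl_eq (a : C0) (b : C1) : (inr b == inl a :> C0 + C1) = false.
Proof. by []. Qed.

Lemma PS_inr n (G : seq (C0 + C1) -> W) :
  (forall s, size s = n -> ~~ all isr s -> G s = 0) ->
  PS n G = PS n (fun b => G (map inr b)).
Proof.
elim: n G => [|n IH] G h //=.
rewrite big_sumType /= [X in X + _]big1 ?add0r; last first.
  by move=> x _; apply: PS_zero => s hs; apply: h => //=; by rewrite hs.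
apply: eq_bigr => z _; rewrite IH // => s hs hr; apply: h => //=; by rewrite hs.
Qed.

Lemma PS_inl n (G : seq (C0 + C1) -> W) :
  (forall s, size s = n -> ~~ okp s -> G s = 0) ->
  PS n G = \sum_(u < n.+1) PS u (fun a => PS (n - u)%N (fun b => G (map inl a ++ map inr b))).
Proof.
elim: n G => [|n IH] G h; first by rewrite big_ord1.
rewrite /= big_sumType /= sum_recl /= addrC; congr (_ + _).
  apply: eq_bigr => z _; rewrite PS_inr //.
  move=> s hs hr; apply: h => //=; by rewrite hs.
transitivity (\sum_x \sum_(u < n.+1) PS u (fun a => PS (n - u)%N (fun b => G (inl x :: (map inl a ++ map inr b))))).
  apply: eq_bigr => x _; apply: IH => s hs hok; apply: h => //=; by rewrite hs.
rewrite exchange_big; apply: eq_bigr => u _ /=.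
by rewrite /bump /= add1n.
Qed.
End SumPaths.

Section Cone.
Variables (C : zmodType) (Chom : int -> C -> Prop) (mu1 : C -> C) (mu2 : C -> C -> C).
Hypothesis HC : Ainf_alg Chom mu1 mu2.
Variables (C0 C1 : finType) (ind0 : C0 -> nat) (ind1 : C1 -> nat)
  (m0 : C0 -> C0 -> C) (m1 : C1 -> C1 -> C) (tau : C0 -> C1 -> C).
Hypothesis Hm0 : twisting_cocycle Chom mu1 mu2 ind0 m0.
Hypothesis Hm1 : twisting_cocycle Chom mu1 mu2 ind1 m1.
Hypothesis Htau : tau_family Chom mu1 mu2 ind0 ind1 m0 m1 tau.

Definition indC (t : C0 + C1) : nat := match t with inl x => (ind0 x).+1 | inr y => ind1 y end.
Definition MC (a b : C0 + C1) : C :=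
  match a, b with
  | inl x, inl z => m0 x z
  | inl x, inr y => ssc (ind0 x) (tau x y)
  | inr y, inr w => m1 y w
  | inr _, inl _ => 0
  end.

Lemma mu2_addl b : forall u v, mu2 (u + v) b = mu2 u b + mu2 v b.
Proof. by case: HC => _ [_ [_ [h _]]]. Qed.
Lemma mu2_addr b : forall u v, mu2 b (u + v) = mu2 b u + mu2 b v.
Proof. by case: HC => _ [_ [_ [_ [h _]]]]. Qed.
Lemma mu1_add : forall u v, mu1 (u + v) = mu1 u + mu1 v.
Proof. by case: HC => _ [_ [h _]]. Qed.
Lemma Cgraded : graded Chom.
Proof. by case: HC. Qed.

Lemma cone_cocycle : twisting_cocycle Chom mu1 mu2 indC MC.
Proof.
have nat1 : forall k : nat, (k.+1)%:Z = k%:Z + 1 by move=> k; rewrite -addn1 PoszD.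
split.
  case=> [x|x] [z|z] /=.
  - by apply: (hom_eq _ (proj1 Hm0 x z)); rewrite !nat1; lia.
  - by apply: (hom_ssc Cgraded); apply: (hom_eq _ (proj1 Htau x z)); rewrite !nat1; lia.
  - exact: (hom0 Cgraded).
  - exact: (proj1 Hm1 x z).
case=> [x|x] [z|z]; rewrite big_sumType /=.
- rewrite [X in _ + X]big1 ?addr0; last by move=> w _; rewrite (mu2_0r HC) ssc0.
  rewrite (proj2 Hm0 x z); apply: eq_bigr => w _; apply: ssc_eq; rewrite !nat1; lia.
- rewrite (ad_ssc mu1_add) (proj2 Htau x z) sscD sscN !ssc_sum; congr (_ + _).
    apply: eq_bigr => w _; rewrite (ad_ssc (mu2_addr _)) ssc_ssc; apply: ssc_eq; rewrite !nat1; lia.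
  rewrite -sumrN; apply: eq_bigr => w _.
  rewrite (ad_ssc (mu2_addl _)) !ssc_ssc -ssc_1; apply: ssc_eq; rewrite !nat1; lia.
- rewrite (ad0 mu1_add) big1 ?add0r; last by move=> w _; rewrite (mu2_0l HC) ssc0.
  by rewrite big1 // => w _; rewrite (mu2_0r HC) ssc0.
- rewrite big1 ?add0r; last by move=> w _; rewrite (mu2_0l HC) ssc0.
  exact: (proj2 Hm1 x z).
Qed.

Lemma zero_r y s : ~~ all (@isr C0 C1) s -> 0 \in pairmap MC (inr y) s.
Proof.
elim: s y => [|t s IH] y //=; case: t => [z|z] /=; first by rewrite in_cons eqxx.
by move=> h; rewrite in_cons IH ?orbT.
Qed.
Lemma zero_l x s : ~~ okp s -> 0 \in pairmap MC (inl x) s.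
Proof.
elim: s x => [|t s IH] x //=; case: t => [z|z] /= h; first by rewrite in_cons IH ?orbT.
by rewrite in_cons zero_r ?orbT.
Qed.

Definition PsiB B (V W : zmodType) (g : V -> seq C -> W) p (v : C0 -> V) (y : C1) : W :=
  \sum_(n < B) \sum_(u < n.+1) \sum_x PS u (fun zs => \sum_w PS (n - u)%N (fun ws =>
   if last w ws == y then ssc ((u : nat)%:Z + msgn ind0 p x zs + msgn ind1 (p - (u : nat)%:Z) w ws)
     (g (v x) (pairmap m0 x zs ++ tau (last x zs) w :: pairmap m1 w ws)) else 0)).

Lemma Psi_PsiB (V : zmodType) (nu : V -> seq C -> V) p (v : {ffun C0 -> V}) y :
  Psi ind0 ind1 m0 m1 tau nu p v y = PsiB (#|C0| + #|C1|) nu p v y.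
Proof.
rewrite /Psi ffunE /PsiB; apply: eq_bigr => n _; apply: eq_bigr => u _; apply: eq_bigr => x _.
rewrite (PS_tuple u (fun zs => \sum_w \sum_(ws : (n - u)%N.-tuple C1 | last w ws == y)
   ssc ((u : nat)%:Z + msgn ind0 p x zs + msgn ind1 (p - (u : nat)%:Z) w ws)
     (nu (v x) (pairmap m0 x zs ++ tau (last x zs) w :: pairmap m1 w ws)))).
apply: PS_ext => zs _; apply: eq_bigr => w _.
by rewrite big_mkcond /= (PS_tuple _ (fun ws => if last w ws == y then
   ssc ((u : nat)%:Z + msgn ind0 p x zs + msgn ind1 (p - (u : nat)%:Z) w ws)
     (nu (v x) (pairmap m0 x zs ++ tau (last x zs) w :: pairmap m1 w ws)) else 0)).
Qed.

Lemma msgnC_inl q x a : msgn indC q (inl x) (map inl a) = msgn ind0 (q - 1) x a.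
Proof.
rewrite (@msgn_map _ (fun t => (ind0 t).+1) _ indC inl) //.
exact: msgn_indS.
Qed.
Lemma msgnC_inr q x b : msgn indC q (inr x) (map inr b) = msgn ind1 q x b.
Proof. by rewrite (@msgn_map _ ind1 _ indC inr). Qed.

Lemma cone_inl N (V W : zmodType) (g : V -> seq C -> W) (Hg : multiadd g) q
  (w : C0 + C1 -> V) y :
  twN indC MC N g q w (inl y) = twN ind0 m0 N g (q - 1) (fun x => w (inl x)) y.
Proof.
rewrite /twN; apply: eq_bigr => n _; rewrite big_sumType /=.
rewrite [X in _ + X]big1 ?addr0; last first.
  move=> x _; rewrite PS_inr; last first.
    by move=> s _ hs; rewrite (ma_zero_in Hg) ?ssc0 ?zero_r //; case: ifP.
  by apply: PS_zero => b _; rewrite last_map.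
apply: eq_bigr => x _; rewrite PS_inl; last first.
  by move=> s _ hs; rewrite (ma_zero_in Hg) ?ssc0 ?zero_l //; case: ifP.
rewrite sum_recr /= subnn [X in X + _]big1 ?add0r; last first.
  move=> u _; apply: PS_zero => a ha; apply: PS_zero => b hb.
  case: b hb => [|b0 b] hb; first by have := ltn_ord u; rewrite /= in hb; lia.
  by rewrite last_cat /= last_map.
apply: PS_ext => a _ /=; rewrite cats0 last_map inl_eq msgnC_inl pairmap_map.
by [].
Qed.

Lemma cone_inr N (V W : zmodType) (g : V -> seq C -> W) (Hg : multiadd g) q
  (w : C0 + C1 -> V) y :
  twN indC MC N.+1 g q w (inr y) =
  ssc (q - 1) (PsiB N g (q - 1) (fun x => w (inl x)) y)
  + twN ind1 m1 N.+1 g q (fun x => w (inr x)) y.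
Proof.
rewrite /twN; under eq_bigr do rewrite big_sumType; rewrite big_split; congr (_ + _); last first.
  apply: eq_bigr => n _; apply: eq_bigr => x _; rewrite PS_inr; last first.
    by move=> s _ hs; rewrite (ma_zero_in Hg) ?ssc0 ?zero_r //; case: ifP.
  by apply: PS_ext => b _; rewrite last_map inr_eq msgnC_inr pairmap_map.
rewrite sum_recl [X in X + _]big1 ?add0r // /PsiB ssc_sum.
apply: eq_bigr => n _; rewrite ssc_sum.
under [RHS]eq_bigr do rewrite ssc_sum.
rewrite [RHS]exchange_big; apply: eq_bigr => x _; rewrite lift0.
rewrite PS_inl; last first.
  by move=> s _ hs; rewrite (ma_zero_in Hg) ?ssc0 ?zero_l //; case: ifP.
rewrite sum_recr [X in _ + X](_ : _ = 0) ?addr0; last first.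
  by apply: PS_zero => a _; rewrite subnn /= cats0 last_map.
apply: eq_bigr => u _; rewrite PS_ssc; apply: PS_ext => a ha.
have hu := ltn_ord u.
rewrite subSn // /= ssc_sum; apply: eq_bigr => z _; rewrite PS_ssc; apply: PS_ext => b hb.
rewrite last_cat last_map /= last_map inr_eq; case: ifP => _; last by rewrite ssc0.
rewrite pairmap_cat last_map /= !pairmap_map (ma_mid_ssc Hg) !ssc_ssc.
apply: ssc_eq.
rewrite msgn_cat size_map ha last_map msgn_cons msgnC_inl msgnC_inr /=.
rewrite (_ : q - (u : nat)%:Z - 1 = q - 1 - (u : nat)%:Z); last by lia.
have e : (((ind0 (last x a)).+1)%N : int) = (ind0 (last x a))%:Z + 1 by rewrite -addn1 PoszD.
rewrite e; lia.
Qed.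
End Cone.

Section PsiBL.
Variables (C : zmodType) (C0 C1 : finType) (ind0 : C0 -> nat) (ind1 : C1 -> nat)
  (m0 : C0 -> C0 -> C) (m1 : C1 -> C1 -> C) (tau : C0 -> C1 -> C).

Lemma PsiB_ext B (V W : zmodType) (g : V -> seq C -> W) p v w y :
  (forall x, v x = w x) -> PsiB ind0 ind1 m0 m1 tau B g p v y = PsiB ind0 ind1 m0 m1 tau B g p w y.
Proof.
move=> h; apply: eq_bigr => n _; apply: eq_bigr => u _; apply: eq_bigr => x _; by rewrite h.
Qed.

Lemma PsiB_add B (V W : zmodType) (g : V -> seq C -> W) (Hg : multiadd g) p v w y :
  PsiB ind0 ind1 m0 m1 tau B g p (fun x => v x + w x) y
  = PsiB ind0 ind1 m0 m1 tau B g p v y + PsiB ind0 ind1 m0 m1 tau B g p w y.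
Proof.
rewrite /PsiB -big_split; apply: eq_bigr => n _ /=; rewrite -big_split; apply: eq_bigr => u _ /=.
rewrite -big_split; apply: eq_bigr => x _ /=; rewrite -PS_add; apply: PS_ext => zs _.
rewrite -big_split; apply: eq_bigr => w' _ /=; rewrite -PS_add; apply: PS_ext => ws _.
by case: ifP => _; rewrite ?addr0 // (ma1 Hg) sscD.
Qed.

Lemma PsiB_ssc B (V W : zmodType) (g : V -> seq C -> W) (Hg : multiadd g) p k v y :
  PsiB ind0 ind1 m0 m1 tau B g p (fun x => ssc k (v x)) y
  = ssc k (PsiB ind0 ind1 m0 m1 tau B g p v y).
Proof.
rewrite /PsiB ssc_sum; apply: eq_bigr => n _; rewrite ssc_sum; apply: eq_bigr => u _.
rewrite ssc_sum; apply: eq_bigr => x _; rewrite PS_ssc; apply: PS_ext => zs _.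
rewrite ssc_sum; apply: eq_bigr => w' _; rewrite PS_ssc; apply: PS_ext => ws _.
case: ifP => _; rewrite ?ssc0 // (ad_ssc (fun a b => ma1 Hg _ a b)) !ssc_ssc; by rewrite addrC.
Qed.
End PsiBL.

Lemma PsiB_deg (C : zmodType) (Chom : int -> C -> Prop) (mu1 : C -> C) (mu2 : C -> C -> C)
  (C0 C1 : finType) (ind0 : C0 -> nat) (ind1 : C1 -> nat)
  (m0 : C0 -> C0 -> C) (m1 : C1 -> C1 -> C) (tau : C0 -> C1 -> C)
  (Hm0 : twisting_cocycle Chom mu1 mu2 ind0 m0)
  (Hm1 : twisting_cocycle Chom mu1 mu2 ind1 m1)
  (Htau : tau_family Chom mu1 mu2 ind0 ind1 m0 m1 tau)
  (F : zmodType) (Fhom : int -> F -> Prop) (nuF : F -> seq C -> F)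
  (G : zmodType) (Ghom : int -> G -> Prop) (nuG : G -> seq C -> G)
  (HG : graded Ghom)
  (phi : F -> seq C -> G)
  (Hphi : Ainf_morphism Chom mu1 mu2 Fhom nuF Ghom nuG phi) B p (v : C0 -> F) y :
  (forall x, Fhom (p - (ind0 x)%:Z) (v x)) ->
  Ghom (p + 1 - (ind1 y)%:Z) (PsiB ind0 ind1 m0 m1 tau B phi p v y).
Proof.
move=> hv.
case: Hphi => _ [hdeg _].
apply: (hom_sum HG) => n _; apply: (hom_sum HG) => u _; apply: (hom_sum HG) => x _.
apply: (PS_hom HG) => zs hzs; apply: (hom_sum HG) => w _; apply: (PS_hom HG) => ws hws.
apply: (hom_if HG) => /eqP hy; apply: (hom_ssc HG).
set qs := pairmap (fun a b => (ind0 a)%:Z - (ind0 b)%:Z - 1) x zs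
   ++ ((ind0 (last x zs))%:Z - (ind1 w)%:Z) :: pairmap (fun a b => (ind1 a)%:Z - (ind1 b)%:Z - 1) w ws.
have hq : homs Chom qs (pairmap m0 x zs ++ tau (last x zs) w :: pairmap m1 w ws).
  apply: homs_cat; first by apply: homs_pairmap; case: Hm0.
  apply: homs_cons; first by case: Htau.
  by apply: homs_pairmap; case: Hm1.
apply: (hom_eq _ (hdeg _ _ _ _ (hv x) hq)).
rewrite /qs big_cat big_cons /= !sum_pairmap_deg size_cat /= !size_pairmap hy.
rewrite -addn1 !PoszD; lia.
Qed.

Unset Implicit Arguments.
Theorem proposition5p19
  (C : zmodType) (Chom : int -> C -> Prop) (mu1 : C -> C) (mu2 : C -> C -> C)
  (HC : Ainf_alg Chom mu1 mu2)
  (C0 C1 : finType) (ind0 : C0 -> nat) (ind1 : C1 -> nat)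
  (m0 : C0 -> C0 -> C) (m1 : C1 -> C1 -> C) (tau : C0 -> C1 -> C)
  (Hm0 : twisting_cocycle Chom mu1 mu2 ind0 m0)
  (Hm1 : twisting_cocycle Chom mu1 mu2 ind1 m1)
  (Htau : tau_family Chom mu1 mu2 ind0 ind1 m0 m1 tau)
  (F : zmodType) (Fhom : int -> F -> Prop) (nuF : F -> seq C -> F)
  (G : zmodType) (Ghom : int -> G -> Prop) (nuG : G -> seq C -> G)
  (HF : Ainf_module Chom mu1 mu2 Fhom nuF)
  (HG : Ainf_module Chom mu1 mu2 Ghom nuG)
  (phi : F -> seq C -> G)
  (Hphi : Ainf_morphism Chom mu1 mu2 Fhom nuF Ghom nuG phi) :
  exists H : int -> {ffun C0 -> F} -> {ffun C1 -> G},
    (forall p v w, deg_el ind0 Fhom p v -> deg_el ind0 Fhom p w ->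
       H p (v + w) = H p v + H p w) /\
    (forall p v, deg_el ind0 Fhom p v -> deg_el ind1 Ghom (p + 1) (H p v)) /\
    (forall p v, deg_el ind0 Fhom p v ->
       Psi ind0 ind1 m0 m1 tau nuG p (tw ind0 m0 phi p v)
       - tw ind1 m1 phi p (Psi ind0 ind1 m0 m1 tau nuF p v)
       = tw ind1 m1 nuG (p + 1) (H p v) + H (p - 1) (tw ind0 m0 nuF p v)).
Proof.
have Hph : multiadd phi by case: Hphi.
have HnF : multiadd nuF by case: HF => _ [].
have HnG : multiadd nuG by case: HG => _ [].
have HgG : graded Ghom by case: HG.
have HgF : graded Fhom by case: HF.
set B := (#|C0| + #|C1|)%N.
exists (fun p v => [ffun y => - PsiB ind0 ind1 m0 m1 tau B phi p v y]).
split; [|split].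
- move=> p v w _ _; apply/ffunP => y; rewrite !ffunE.
  have -> : PsiB ind0 ind1 m0 m1 tau B phi p (v + w) y
      = PsiB ind0 ind1 m0 m1 tau B phi p (fun x => v x + w x) y.
    by apply: PsiB_ext => x; rewrite ffunE.
  by rewrite PsiB_add // opprD.
- move=> p v hv y; rewrite ffunE; apply: (homN HgG).
  apply: (PsiB_deg Hm0 Hm1 Htau HgG Hphi) => x.
  by have := hv x.
move=> p v hv; apply/ffunP => y.
have eD : forall (f g : {ffun C1 -> G}), (f + g) y = f y + g y by move=> f g; rewrite !ffunE.
have eB : forall (f g : {ffun C1 -> G}), (f - g) y = f y - g y by move=> f g; rewrite !ffunE.
rewrite eB eD [X in _ = _ + X]ffunE Psi_PsiB !tw_twN.
have HM1deg := proj1 Hm1.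
have HM0deg := proj1 Hm0.
set N := B.+1.
have hB1 : (#|C1| < N)%N by rewrite /N /B ltnS leq_addl.
have hB0 : (#|C0| < N)%N by rewrite /N /B ltnS leq_addr.
pose v' := fun t : C0 + C1 => match t with inl x => v x | inr _ => 0 end.
have hT : (#|{: C0 + C1}| < N)%N by rewrite card_sum.
have HMC := cone_cocycle HC Hm0 Hm1 Htau.
have hv' : forall t, Fhom ((p + 1) - (indC ind0 ind1 t)%:Z) (v' t).
  case=> [x|x] /=; last exact: (hom0 HgF).
  by apply: (hom_eq _ (hv x)); rewrite -addn1 PoszD; lia.
have CMe := @chain_map _ _ _ _ HC _ _ _ HMC _ _ _ _ _ _ _ HnF HnG Hphi N (p + 1) v'
  (fun t => twN (indC ind0 ind1) (MC ind0 m0 m1 tau) N phi (p + 1) v' t)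
  (fun t => twN (indC ind0 ind1) (MC ind0 m0 m1 tau) N nuF (p + 1) v' t)
  (inr y) hT hv' (fun _ => erefl) (fun _ => erefl).
rewrite /N (cone_inr ind0 ind1 m0 m1 tau B HnG) (cone_inr ind0 ind1 m0 m1 tau B Hph) !addrK in CMe.
have hu1l : forall x, twN (indC ind0 ind1) (MC ind0 m0 m1 tau) N phi (p + 1) v' (inl x)
    = tw ind0 m0 phi p v x.
  by move=> x; rewrite cone_inl // addrK (twN_bound HC HM0deg) // tw_twN.
have hu2l : forall x, twN (indC ind0 ind1) (MC ind0 m0 m1 tau) N nuF (p + 1) v' (inl x)
    = tw ind0 m0 nuF p v x.
  by move=> x; rewrite cone_inl // addrK (twN_bound HC HM0deg) // tw_twN.
have hu1r : forall x, twN (indC ind0 ind1) (MC ind0 m0 m1 tau) N phi (p + 1) v' (inr x)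
    = ssc p (PsiB ind0 ind1 m0 m1 tau B phi p v x).
  move=> x; rewrite /N cone_inr // addrK.
  by rewrite (@twN_ext _ _ ind1 m1 B.+1 _ _ phi (p + 1) _ (fun _ => 0) x) // twN_0 // addr0.
have hu2r : forall x, twN (indC ind0 ind1) (MC ind0 m0 m1 tau) N nuF (p + 1) v' (inr x)
    = ssc p (PsiB ind0 ind1 m0 m1 tau B nuF p v x).
  move=> x; rewrite /N cone_inr // addrK.
  by rewrite (@twN_ext _ _ ind1 m1 B.+1 _ _ nuF (p + 1) _ (fun _ => 0) x) // twN_0 // addr0.
rewrite (PsiB_ext _ _ _ _ _ _ _ _ _ hu1l) (PsiB_ext _ _ _ _ _ _ _ _ _ hu2l) in CMe.
rewrite (twN_ext _ _ _ _ _ _ hu1r) (twN_ext _ _ _ _ _ _ hu2r) in CMe.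
rewrite !twN_ssc // in CMe.
have CMe' := congr1 (ssc p) CMe.
rewrite !sscD !ssc_pp ssc_pp1 in CMe'.
rewrite -(twN_bound HC HM1deg Hph p _ y hB1) -(twN_bound HC HM1deg HnG (p + 1) _ y hB1).
rewrite (@twN_ext _ _ ind1 m1 B.+1 _ _ phi p _ (PsiB ind0 ind1 m0 m1 tau B nuF p v) y); last first.
  by move=> x; rewrite Psi_PsiB.
rewrite (@twN_ext _ _ ind1 m1 B.+1 _ _ nuG (p + 1) _
   (fun x => ssc 1 (PsiB ind0 ind1 m0 m1 tau B phi p v x)) y); last first.
  by move=> x; rewrite ffunE ssc1N.
rewrite twN_ssc // ssc1N.
exact: zmod_fin.
Qed.
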